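(* Fix a real parameter $k$. Let $G$ be a topology that is strongly consistent (with respect to $k$) and physically connected. Then $G$ is strongly connected, i.e., for any two nodes $u,v$ of $G$ there is a directed path from $u$ to $v$ consisting only of active links.
   Context: A topology is a finite directed graph $G=(V,E)$ whose links $e\in E$ carry a real weight $w(e)$ and a state $s(e)\in\{\mathrm{active},\mathrm{inactive},\mathrm{unclassified}\}$; a link is classified if it is active or inactive. A path is a finite sequence of links in which the target of each link is the source of the next. $G$ is physically connected if between any two nodes there is a directed path of links in arbitrary state. $G$ is structurally consistent if it has no loops and no parallel links (two distinct links with the same source and target). For a link $ab$ from $a$ to $b$, a triangle for $ab$ is a node $c\notin\{a,b\}$ with classified links $ac$ and $cb$ such that $w(ab)>\max(w(ac),w(cb))$ and $w(ab)\ge k\cdot\min(w(ac),w(cb))$. Inactive-link constraint: every inactive link has a triangle. Active-link constraint: no active link has a triangle. Unclassified-link constraint: no link is unclassified. $G$ is weakly consistent if it is structurally consistent and fulfills the active-link and inactive-link constraints; it is strongly consistent if it is weakly consistent and additionally fulfills the unclassified-link constraint. *)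

(* Defs.v *)
From HB Require Import structures.
From mathcomp Require Import all_boot all_order all_algebra.
From mathcomp Require Import reals.
Set Implicit Arguments. Unset Strict Implicit. Unset Printing Implicit Defensive.
Import Order.TTheory GRing.Theory Num.Theory.
Local Open Scope ring_scope.

Inductive link_state := active | inactive | unclassified.

Record topology (R : realType) := Topology {
  node : finType;
  link : finType;
  src : link -> node;
  tgt : link -> node;
  weight : link -> R;
  state : link -> link_state }.

Section Defs.
Variables (R : realType) (G : topology R).

Definition classified (e : link G) : Prop :=
  state e = active \/ state e = inactive.

Fixpoint is_path (u v : node G) (p : seq (link G)) : Prop :=
  match p with
  | [::] => u = v
  | e :: p' => src e = u /\ is_path (tgt e) v p'
  end.

Definition physically_connected : Prop :=
  forall u v : node G, exists p : seq (link G), is_path u v p.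

Definition strongly_connected : Prop :=
  forall u v : node G, exists p : seq (link G),
    is_path u v p /\ (forall e, e \in p -> state e = active).

Definition no_loops : Prop := forall e : link G, src e <> tgt e.

Definition no_parallel_links : Prop :=
  forall e e' : link G, src e = src e' -> tgt e = tgt e' -> e = e'.

Definition structurally_consistent : Prop := no_loops /\ no_parallel_links.

Definition triangle (k : R) (ab : link G) (c : node G) : Prop :=
  c <> src ab /\ c <> tgt ab /\
  exists ac cb : link G,
    src ac = src ab /\ tgt ac = c /\ src cb = c /\ tgt cb = tgt ab /\
    classified ac /\ classified cb /\
    weight ab > Num.max (weight ac) (weight cb) /\
    weight ab >= k * Num.min (weight ac) (weight cb).

Definition has_triangle (k : R) (e : link G) : Prop := exists c, triangle k e c.

Definition inactive_link_constraint (k : R) : Prop :=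
  forall e : link G, state e = inactive -> has_triangle k e.

Definition active_link_constraint (k : R) : Prop :=
  forall e : link G, state e = active -> ~ has_triangle k e.

Definition unclassified_link_constraint : Prop :=
  forall e : link G, state e <> unclassified.

Definition weakly_consistent (k : R) : Prop :=
  [/\ structurally_consistent, active_link_constraint k & inactive_link_constraint k].

Definition strongly_consistent (k : R) : Prop :=
  weakly_consistent k /\ unclassified_link_constraint.

End Defs.

(* Main.v *)
Require Import Defs.
From mathcomp Require Import all_boot all_order all_algebra.
From mathcomp Require Import reals.
Import Order.TTheory GRing.Theory Num.Theory.
Local Open Scope ring_scope.

Lemma is_path_cat (R : realType) (G : topology R) (u w v : node G) p q :
  is_path u w p -> is_path w v q -> is_path u v (p ++ q).
Proof.
elim: p u => [|e p IH] u /=; first by move=> ->.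
by move=> [-> H1] H2; split => //; apply: IH.
Qed.

Lemma link_active (R : realType) (k : R) (G : topology R) :
  strongly_consistent G k ->
  forall n (e : link G), (#|[set e' : link G | (weight e' < weight e)%R]| < n)%N ->
  exists p, is_path (src e) (tgt e) p /\ (forall e', e' \in p -> state e' = active).
Proof.
move=> [[_ Hact Hinact] Huncl].
elim=> [|n IH] e //= Hn.
have Hlt : forall e' : link G, weight e' < weight e ->
   exists p, is_path (src e') (tgt e') p /\ (forall x, x \in p -> state x = active).
  move=> e' He'; apply: IH.
  rewrite ltnS in Hn; apply: (leq_trans _ Hn).
  apply: proper_card; apply/properP; split.
    apply/subsetP => x; rewrite !inE => Hx; exact: lt_trans Hx He'.
  by exists e'; rewrite !inE ?ltxx.
case Hs: (state e).
- by exists [:: e]; split => [/=|x]; [split | rewrite inE => /eqP ->].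
- have [c [_ [_ [ac [cb [Hac1 [Hac2 [Hcb1 [Hcb2 [_ [_ [Hmax _]]]]]]]]]]]] := Hinact e Hs.
  move: Hmax; rewrite gt_max => /andP [H1 H2].
  have [p1 [P1 A1]] := Hlt ac H1.
  have [p2 [P2 A2]] := Hlt cb H2.
  exists (p1 ++ p2); split.
    apply: (@is_path_cat _ _ _ c); [by rewrite -Hac1 -Hac2 | by rewrite -Hcb1 -Hcb2].
  by move=> x; rewrite mem_cat => /orP [/A1|/A2].
- by have := Huncl e.
Qed.

Theorem theorem2 (R : realType) (k : R) (G : topology R) :
  strongly_consistent G k -> physically_connected G -> strongly_connected G.
Proof.
move=> Hc Hp u v.
have [p Pp] := Hp u v.
elim: p u Pp => [|e p IH] u /=.
  by move=> ->; exists [::].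
move=> [<- Pp].
have [q [Pq Aq]] := IH _ Pp.
have [r [Pr Ar]] := @link_active _ _ _ Hc _ e (ltnSn #|[set e' : link G | (weight e' < weight e)%R]|).
exists (r ++ q); split; first exact: is_path_cat Pr Pq.
by move=> x; rewrite mem_cat => /orP [/Ar|/Aq].
Qed.
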